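(* The following statements are equivalent: (1) Every bridgeless cubic graph has a 4-line Fano-flow. (2) Every bridgeless cubic graph has three 1-factors $M_1,M_2,M_3$ such that $M_1\cap M_2\cap M_3=\emptyset$. (3) Every bridgeless cubic graph has a bipartite core. (4) Every bridgeless cubic graph has a triangle-free core. (5) Every bridgeless cubic graph has three 1-factors such that the complement of their union is an acyclic graph.
   Context: A Fano-flow of a cubic graph $G$ is a map $\phi:E(G)\to\mathbb{Z}_2^3\setminus\{0\}$ such that at each vertex the three incident edges receive pairwise distinct values with sum $0$; equivalently, these values form a line of the Fano plane, whose points are the seven nonzero elements of $\mathbb{Z}_2^3$ and whose lines are the triples $\{a,b,c\}$ of distinct nonzero elements with $a+b+c=0$. A $k$-line Fano-flow is a Fano-flow in which at most $k$ distinct lines occur as the sets of values at the vertices. A 1-factor is a perfect matching. For three 1-factors $M_1,M_2,M_3$ of $G$, let $E_i$ be the set of edges lying in exactly $i$ of them; the core of $G$ with respect to $M_1,M_2,M_3$ is the subgraph $G[E_0\cup E_2\cup E_3]$ induced by these edges. A core is triangle-free if it contains no circuit of length $3$. The complement of the union of $M_1,M_2,M_3$ is the subgraph $G[E_0]$ induced by the edges in none of them. *)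

(* Defs.v *)
(* Cubic graphs are finite multigraphs given by a vertex
   type V, an edge type E and an end-map g : E -> V * V (edges unoriented). *)
From mathcomp Require Import all_boot all_order all_algebra.
Set Implicit Arguments. Unset Strict Implicit. Unset Printing Implicit Defensive.
Import GRing.Theory.

Section Graphs.
Variables (V E : finType) (g : E -> V * V).

Definition joins (e : E) (x y : V) : bool := (g e == (x, y)) || (g e == (y, x)).

Definition inc (v : V) : {set E} := [set e | ((g e).1 == v) || ((g e).2 == v)].

Definition loopless : Prop := forall e, (g e).1 != (g e).2.

Definition cubic : Prop := loopless /\ forall v, #|inc v| = 3.

Definition adjF (F : {set E}) : rel V := fun x y => [exists e in F, joins e x y].

Definition bridge (e : E) : Prop := ~~ connect (adjF (~: [set e])) (g e).1 (g e).2.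

Definition bridgeless : Prop := forall e, ~ bridge e.

Definition Z23 := 'rV['F_2]_3.

Definition fano_flow (phi : E -> Z23) : Prop :=
  (forall e, phi e != 0%R) /\
  (forall v, (forall e f, e \in inc v -> f \in inc v -> e != f -> phi e != phi f)
             /\ (\sum_(e in inc v) phi e)%R = 0%R).

Definition line_at (phi : E -> Z23) (v : V) : {set Z23} := [set phi e | e in inc v].

Definition k_line_fano_flow (k : nat) (phi : E -> Z23) : Prop :=
  fano_flow phi /\ #|[set line_at phi v | v in V]| <= k.

Definition one_factor (M : {set E}) : Prop := forall v, #|inc v :&: M| = 1.

Definition mult3 (M1 M2 M3 : {set E}) (e : E) : nat :=
  (e \in M1) + (e \in M2) + (e \in M3).

Definition core (M1 M2 M3 : {set E}) : {set E} := [set e | mult3 M1 M2 M3 e != 1].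
Definition E0 (M1 M2 M3 : {set E}) : {set E} := [set e | mult3 M1 M2 M3 e == 0].

(* a circuit in the subgraph with edge set F: distinct vertices v_0..v_{k-1}
   (k >= 2) and distinct edges e_0..e_{k-1} of F, e_i joining v_i and v_{i+1 mod k} *)
Definition circuit (F : {set E}) (vs : seq V) (es : seq E) : Prop :=
  [/\ 2 <= size vs, size es = size vs, uniq vs & uniq es] /\
  [/\ all (fun e => e \in F) es &
      all (fun p => joins p.1 p.2.1 p.2.2) (zip es (zip vs (rot 1 vs)))].

Definition acyclic (F : {set E}) : Prop := forall vs es, ~ circuit F vs es.

Definition triangle_free (F : {set E}) : Prop :=
  forall vs es, size vs = 3 -> ~ circuit F vs es.

Definition bipartite (F : {set E}) : Prop :=
  exists c : V -> bool, forall e, e \in F -> c (g e).1 != c (g e).2.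

End Graphs.

Definition stmt1 : Prop := forall (V E : finType) (g : E -> V * V),
  cubic g -> bridgeless g -> exists phi : E -> Z23, k_line_fano_flow g 4 phi.
Definition stmt2 : Prop := forall (V E : finType) (g : E -> V * V),
  cubic g -> bridgeless g -> exists M1 M2 M3 : {set E},
  [/\ one_factor g M1, one_factor g M2, one_factor g M3 & M1 :&: M2 :&: M3 = set0].
Definition stmt3 : Prop := forall (V E : finType) (g : E -> V * V),
  cubic g -> bridgeless g -> exists M1 M2 M3 : {set E},
  [/\ one_factor g M1, one_factor g M2, one_factor g M3 & bipartite g (core M1 M2 M3)].
Definition stmt4 : Prop := forall (V E : finType) (g : E -> V * V),
  cubic g -> bridgeless g -> exists M1 M2 M3 : {set E},
  [/\ one_factor g M1, one_factor g M2, one_factor g M3 & triangle_free g (core M1 M2 M3)].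
Definition stmt5 : Prop := forall (V E : finType) (g : E -> V * V),
  cubic g -> bridgeless g -> exists M1 M2 M3 : {set E},
  [/\ one_factor g M1, one_factor g M2, one_factor g M3 & acyclic g (E0 M1 M2 M3)].

(* Main.v *)
Require Import Defs.
From mathcomp Require Import all_boot all_order all_algebra zify.
Set Implicit Arguments. Unset Strict Implicit. Unset Printing Implicit Defensive.
Import GRing.Theory.

Lemma card3P (T : finType) (A : {set T}) : #|A| = 3 ->
  exists e1 e2 e3, [/\ e1 != e2, e1 != e3, e2 != e3 & A = [set e1; e2; e3]].
Proof.
move=> hA; rewrite cardE in hA.
have U := enum_uniq (pred_of_set A).
case E: (enum A) hA U => [|e1 [|e2 [|e3 [|? ?]]]] //= _.
rewrite !inE !negb_or => /and3P [/andP [h12 h13] h23 _].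
exists e1, e2, e3; split => //.
by apply/setP => x; rewrite -[x \in A]mem_enum E !inE orbA.

Qed.

Lemma card_IM (T : finType) (A M : {set T}) :
  #|A :&: M| = \sum_(x in A) (x \in M : nat).
Proof.
rewrite -sum1_card (eq_bigl (fun x => (x \in A) && (x \in M))); last first.
  by move=> x; rewrite inE.
rewrite -big_mkcondr /=; first by [].
Qed.

Lemma big3 (R : Type) (idx : R) (op : Monoid.com_law idx) (T : finType)
  (e1 e2 e3 : T) (F : T -> R) : e1 != e2 -> e1 != e3 -> e2 != e3 ->
  \big[op/idx]_(x in [set e1; e2; e3]) F x = op (F e1) (op (F e2) (F e3)).
Proof.
move=> h12 h13 h23.
rewrite -setUA big_setU1; last by rewrite !inE negb_or h12 h13.
rewrite big_setU1; last by rewrite !inE h23.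
by rewrite big_set1.
Qed.

Section G.
Variables (V E : finType) (g : E -> V * V).

Lemma joins_inc e x y : joins g e x y -> (e \in inc g x) && (e \in inc g y).
Proof.
by rewrite /joins /inc !inE; case/orP => /eqP ->; rewrite /= !eqxx ?orbT.
Qed.

Lemma vtx3 (cg : cubic g) v : exists e1 e2 e3,
  [/\ e1 != e2, e1 != e3, e2 != e3 & inc g v = [set e1; e2; e3]].
Proof. by apply: card3P; case: cg. Qed.

Lemma of_cnt M (hM : one_factor g M) v e1 e2 e3 :
  e1 != e2 -> e1 != e3 -> e2 != e3 -> inc g v = [set e1; e2; e3] ->
  (e1 \in M) + (e2 \in M) + (e3 \in M) = 1.
Proof.
move=> h12 h13 h23 hv; have := hM v; rewrite card_IM hv big3 //.
by rewrite -addnA.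
Qed.

Lemma E0P (M1 M2 M3 : {set E}) e : e \in E0 M1 M2 M3 -> [/\ e \notin M1, e \notin M2 & e \notin M3].
Proof. by rewrite inE /mult3; case: (e \in M1); case: (e \in M2); case: (e \in M3). Qed.

Lemma third_in (cg : cubic g) M v e f : one_factor g M ->
  e \in inc g v -> f \in inc g v -> e != f -> e \notin M -> f \notin M ->
  exists2 h, inc g v :\: [set e; f] = [set h] & h \in M.
Proof.
move=> hM ev fv ef eM fM.
have : #|inc g v :\: [set e; f]| == 1.
  have sub : [set e; f] \subset inc g v.
    by apply/subsetP => x; rewrite in_set2 => /orP [] /eqP ->.
  rewrite cardsD (setIidPr sub).
  by rewrite cards2 ef; case: cg => _ ->.
case/cards1P => h hh; exists h => //.
have := hM v; move/eqP; rewrite eqn_leq => /andP [_]; rewrite card_gt0 => /set0Pn [x].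
rewrite in_setI => /andP [xv xM].
have : x \in inc g v :\: [set e; f].
  rewrite in_setD in_set2 xv andbT negb_or; apply/andP; split; apply/eqP => ex; subst x.
  - by rewrite xM in eM.
  - by rewrite xM in fM.
by rewrite hh in_set1 => /eqP <-.
Qed.

Lemma circ_nth F vs es x0 e0 : circuit g F vs es -> forall i, i < size vs ->
  joins g (nth e0 es i) (nth x0 vs i) (nth x0 (rot 1 vs) i).
Proof.
case=> [[h2 hs uv ue] [_ hall]] i hi.
move/all_nthP: hall => /(_ (e0, (x0, x0)) i).
rewrite size_zip size_zip size_rot hs !minnn => /(_ hi).
by rewrite nth_zip ?size_zip ?size_rot ?hs ?minnn // nth_zip ?size_rot.
Qed.

Lemma circ_F F vs es e : circuit g F vs es -> e \in es -> e \in F.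
Proof. by case=> _ [/allP h _] /h. Qed.

Lemma circ_v0 F v0 vs es : circuit g F (v0 :: vs) es ->
  exists e e', [/\ e \in es, e' \in es, e != e', e \in inc g v0 & e' \in inc g v0].
Proof.
move=> C; have [[h2 hs uv ue] _] := C.
case: es C hs ue => [|f0 es'] // C hs ue.
have h0 := circ_nth v0 f0 C (i := 0) (ltn0Sn _).
have hk := circ_nth v0 f0 C (i := size vs) (ltnSn _).
rewrite rot1_cons nth_rcons ltnn eqxx in hk.
exists f0, (nth f0 (f0 :: es') (size vs)); split.
- by rewrite inE eqxx.
- by rewrite mem_nth // hs.
- have hs' : size vs < size (f0 :: es') by rewrite hs.
  have := @nth_uniq _ f0 (f0 :: es') 0 (size vs) isT hs' ue.
  by rewrite /= => ->; case: (vs) h2.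
- by case/andP: (joins_inc h0).
- by case/andP: (joins_inc hk).
Qed.

Lemma joins_c (c : V -> bool) e x y : joins g e x y ->
  c (g e).1 != c (g e).2 -> c x != c y.
Proof. by rewrite /joins; case/orP => /eqP -> //=; rewrite eq_sym. Qed.

Lemma bip_tf F : bipartite g F -> triangle_free g F.
Proof.
case=> c hc vs es hs C.
have [[_ hes _ _] _] := C.
case: vs hs C hes => [|a [|b [|d [|]]]] // _ C hes.
case: es C hes => [|f0 [|f1 [|f2 [|]]]] // C _.
have j0 := circ_nth a f0 C (i := 0) isT.
have j1 := circ_nth a f0 C (i := 1) isT.
have j2 := circ_nth a f0 C (i := 2) isT.
rewrite /= in j0 j1 j2.
have := joins_c j0 (hc _ (circ_F C (_ : f0 \in [:: f0; f1; f2]))).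

have := joins_c j1 (hc _ (circ_F C (_ : f1 \in [:: f0; f1; f2]))).

have := joins_c j2 (hc _ (circ_F C (_ : f2 \in [:: f0; f1; f2]))).

rewrite !inE !eqxx ?orbT => /(_ isT) H2 /(_ isT) H1 /(_ isT) H0.
move: H0 H1 H2; case: (c a); case: (c b); case: (c d) => //=.
Qed.

Lemma s2_5 (cg : cubic g) M1 M2 M3 : one_factor g M1 -> one_factor g M2 ->
  one_factor g M3 -> M1 :&: M2 :&: M3 = set0 -> acyclic g (E0 M1 M2 M3).
Proof.
move=> h1 h2 h3 h0 vs es C.
case: vs C => [|v0 vs] C; first by case: C => [[]].
have [e [e' [ee ee' ne ev ev']]] := circ_v0 C.
have [n1 n2 n3] := E0P (circ_F C ee).
have [m1 m2 m3] := E0P (circ_F C ee').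
have [k1 hk1 k1M] := third_in cg h1 ev ev' ne n1 m1.
have [k2 hk2 k2M] := third_in cg h2 ev ev' ne n2 m2.
have [k3 hk3 k3M] := third_in cg h3 ev ev' ne n3 m3.
move: hk2 hk3; rewrite hk1 => /set1_inj e2 /set1_inj e3; subst k2 k3.
have : k1 \in M1 :&: M2 :&: M3 by rewrite !in_setI k1M k2M k3M.
by rewrite h0 in_set0.
Qed.
End G.

Section Core.
Variables (V E : finType) (g : E -> V * V).
Hypothesis cg : cubic g.
Variables (M1 M2 M3 : {set E}).
Hypotheses (h1 : one_factor g M1) (h2 : one_factor g M2) (h3 : one_factor g M3).
Hypothesis h0 : M1 :&: M2 :&: M3 = set0.

Local Notation m := (mult3 M1 M2 M3).

Lemma m_le2 e : m e <= 2.
Proof.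
rewrite /mult3; case e1: (e \in M1); case e2: (e \in M2); case e3: (e \in M3) => //.
have : e \in M1 :&: M2 :&: M3 by rewrite !in_setI e1 e2 e3.
by rewrite h0 in_set0.
Qed.

Lemma loc v : exists e1 e2 e3, [/\ e1 != e2, e1 != e3, e2 != e3,
  inc g v = [set e1; e2; e3] & m e1 + m e2 + m e3 = 3].
Proof.
have [e1 [e2 [e3 [d12 d13 d23 hv]]]] := vtx3 cg v.
exists e1, e2, e3; split => //.
have := of_cnt h1 d12 d13 d23 hv; have := of_cnt h2 d12 d13 d23 hv.
have := of_cnt h3 d12 d13 d23 hv; rewrite /mult3; lia.
Qed.

Lemma in3 (x e1 e2 e3 : E) : x \in [set e1; e2; e3] -> [\/ x = e1, x = e2 | x = e3].
Proof. by rewrite !inE => /orP [/orP []|] /eqP ->; [apply: Or31|apply: Or32|apply: Or33]. Qed.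

Lemma uniq_k v k e f : (k == 0) || (k == 2) -> e \in inc g v -> f \in inc g v ->
  m e = k -> m f = k -> e = f.
Proof.
move=> hk ev fv me mf; apply/eqP/negP => /negP ne.
have [e1 [e2 [e3 [d12 d13 d23 hv s]]]] := loc v.
have b1 := m_le2 e1; have b2 := m_le2 e2; have b3 := m_le2 e3.
rewrite hv in ev fv.
move/eqP: mf; move/eqP: me => me mf.
case/orP: hk => /eqP hk; subst k;
case/in3: ev => ?; case/in3: fv => ?; subst e f; try by rewrite eqxx in ne.
all: move/eqP: me => me; move/eqP: mf => mf; lia.
Qed.

Definition other (v : V) e := if (g e).1 == v then (g e).2 else (g e).1.

Lemma other_prop v e : e \in inc g v ->
  [/\ e \in inc g (other v e), other (other v e) e = v & other v e != v].
Proof.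
have ll := proj1 cg e.
rewrite /other /inc !inE; case: ((g e).1 =P v) => [<-|ne] /=.
  by move=> _; rewrite eqxx orbT (negbTE ll); split => //; rewrite eq_sym.
by move=> /eqP hv; rewrite -hv eqxx /=; split.
Qed.

Definition sig k v := if [pick e in inc g v | m e == k] is Some e then other v e else v.

Lemma sig_some k v e : (k == 0) || (k == 2) -> e \in inc g v -> m e = k ->
  sig k v = other v e.
Proof.
move=> hk ev me; rewrite /sig; case: pickP => [f /andP [fv /eqP mf] | /(_ e)].
  by rewrite (uniq_k hk fv ev mf me).
by rewrite ev me eqxx.
Qed.

Lemma sig_none k v : [exists e in inc g v, m e == k] = false -> sig k v = v.
Proof.
move=> hn; rewrite /sig; case: pickP => // f /andP [fv mf].
by move: hn; apply: contraFeq => _; apply/existsP; exists f; rewrite fv mf.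
Qed.

Lemma sig_inv k v : (k == 0) || (k == 2) -> sig k (sig k v) = v.
Proof.
move=> hk; case: (boolP [exists e in inc g v, m e == k]).
  case/existsP => e /andP [ev /eqP me].
  rewrite (sig_some hk ev me).
  have [ew oo _] := other_prop ev.
  by rewrite (sig_some hk ew me).
by move/negbTE => hn; rewrite !(sig_none hn).
Qed.

Lemma sig_fix k v : (k == 0) || (k == 2) ->
  (sig k v == v) = ~~ [exists e in inc g v, m e == k].
Proof.
move=> hk; case: (boolP [exists e in inc g v, m e == k]).
  case/existsP => e /andP [ev /eqP me].
  by rewrite (sig_some hk ev me); have [_ _ /negbTE ->] := other_prop ev.
by move/negbTE => hn; rewrite (sig_none hn) eqxx.
Qed.

Lemma has02 v : [exists e in inc g v, m e == 0] = [exists e in inc g v, m e == 2].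
Proof.
have [e1 [e2 [e3 [d12 d13 d23 hv s]]]] := loc v.
have b1 := m_le2 e1; have b2 := m_le2 e2; have b3 := m_le2 e3.
have ex3 k : [exists e in inc g v, m e == k] = [|| m e1 == k, m e2 == k | m e3 == k].
  apply/existsP/idP => [[e /andP [ev ek]]|].
    by rewrite hv in ev; case/in3: ev => ?; subst e; rewrite ek ?orbT.
  case/or3P => ek; [exists e1|exists e2|exists e3]; rewrite ek hv !inE eqxx ?orbT //.
rewrite !ex3; move: (m e1) (m e2) (m e3) s b1 b2 b3.
by do 3!case=> [|[|[|?]]] //.
Qed.

Lemma sig_fix02 v : (sig 0 v == v) = (sig 2 v == v).
Proof. by rewrite !sig_fix // has02. Qed.

Definition tau x := sig 2 (sig 0 x).
Definition tau' x := sig 0 (sig 2 x).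

Lemma tauK : cancel tau tau'.
Proof. by move=> x; rewrite /tau /tau' sig_inv // sig_inv. Qed.

Lemma tau_inj : injective tau.
Proof. exact: can_inj tauK. Qed.

Definition corev x := sig 0 x != x.

Lemma core_sig0 x : corev x -> corev (sig 0 x).
Proof. by rewrite /corev sig_inv // eq_sym. Qed.

Lemma core_sig2 x : corev x -> corev (sig 2 x).
Proof. by rewrite /corev !sig_fix02 sig_inv // eq_sym. Qed.

Lemma core_iter j x : corev x -> corev (iter j tau x).
Proof.
elim: j => //= j IH cx; rewrite /tau; apply: core_sig2; apply: core_sig0; exact: IH.
Qed.

Lemma sig0_iter j y : sig 0 (iter j tau y) = iter j tau' (sig 0 y).
Proof.
by elim: j => //= j <-.
Qed.

Lemma iter_cancel j y : iter j tau' (iter j tau y) = y.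
Proof.
by elim: j y => // j IH y; rewrite iterSr iterS tauK.
Qed.
Lemma Kclaim x : corev x -> ~~ fconnect tau x (sig 0 x).
Proof.
move=> cx; apply/negP => /iter_findex; set k := findex _ _ _ => hk.
have kE := odd_double_half k; set j := k./2 in kE.
have su := sig0_iter j x; set u := iter j tau x in su.
have cu : corev u := core_iter j cx.
rewrite -hk -kE in su.
case: (odd k) su => /= su.
- rewrite add0n -addnn iterD -/u -iterS iterSr iter_cancel in su.
  have cw := core_sig0 cu.
  have fw : sig 2 (sig 0 u) = sig 0 u by rewrite {2}su.
  by rewrite /corev sig_fix02 fw eqxx in cw.
- rewrite add0n -addnn iterD iter_cancel -/u in su.
  by move: cu; rewrite /corev su eqxx.
Qed.

Definition rt x := fingraph.root (frel tau) x.
Definition col x := (enum_rank (rt x) < enum_rank (rt (sig 0 x)))%N.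

Lemma csym : connect_sym (frel tau).
Proof. exact: fconnect_sym tau_inj. Qed.

Lemma rt_eq x y : fconnect tau x y -> rt x = rt y.
Proof. by move/(fingraph.rootP csym). Qed.

Lemma rt_neq x : corev x -> rt x != rt (sig 0 x).
Proof. by move/Kclaim; apply: contra => /eqP /(fingraph.rootP csym). Qed.

Lemma rk_neq (a b : V) : rt a != rt b ->
  (enum_rank (rt a) < enum_rank (rt b))%N != (enum_rank (rt b) < enum_rank (rt a))%N.
Proof.
move=> ne; have : (enum_rank (rt a) : nat) != enum_rank (rt b).
  by apply: contra ne => /eqP /val_inj /enum_rank_inj ->.
case: ltngtP => //; by rewrite eqxx.
Qed.

Lemma s2_3 : bipartite g (core M1 M2 M3).
Proof.
exists col => e; rewrite inE => m1.
have mb := m_le2 e.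
set p := (g e).1; set q := (g e).2.
have ep : e \in inc g p by rewrite inE eqxx.
have opq : other p e = q by rewrite /other eqxx.
have ll : q != p by rewrite eq_sym; exact: (proj1 cg e).
have : (m e == 0) || (m e == 2) by move: m1 mb; case: (m e) => [|[|[|]]].
case/orP => /eqP me.
- have s0 : sig 0 p = q by rewrite (sig_some _ ep me).
  have s0' : sig 0 q = p by rewrite -s0 sig_inv.
  have cp : corev p by rewrite /corev s0.
  have := rt_neq cp; rewrite s0 => ne.
  by rewrite /col s0 s0'; apply: rk_neq.
- have s2 : sig 2 p = q by rewrite (sig_some _ ep me).
  have s2' : sig 2 q = p by rewrite -s2 sig_inv.
  have cp : corev p by rewrite /corev sig_fix02 s2.
  have r1 : rt (sig 0 q) = rt p.
    by apply: rt_eq; apply: connect1; rewrite /= /tau sig_inv // s2'.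
  have r2 : rt (sig 0 p) = rt q.
    by apply: rt_eq; apply: connect1; rewrite /= /tau sig_inv // s2.
  have := rt_neq cp; rewrite r2 => ne.
  by rewrite /col r1 r2; apply: rk_neq.
Qed.
End Core.

Definition a4 : 'I_4 := @Ordinal 4 0 isT.
Definition b4 : 'I_4 := @Ordinal 4 1 isT.
Definition c4 : 'I_4 := @Ordinal 4 2 isT.
Definition d4 : 'I_4 := @Ordinal 4 3 isT.
Definition i0 : 'I_7 := @Ordinal 7 0 isT.
Definition i1 : 'I_7 := @Ordinal 7 1 isT.
Definition i2 : 'I_7 := @Ordinal 7 2 isT.
Definition i3 : 'I_7 := @Ordinal 7 3 isT.
Definition i4 : 'I_7 := @Ordinal 7 4 isT.
Definition i5 : 'I_7 := @Ordinal 7 5 isT.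
Definition i6 : 'I_7 := @Ordinal 7 6 isT.

Section Gadget.
Variables (V E : finType) (g : E -> V * V).
Hypothesis cg : cubic g.

Definition V' := (V + (E * 'I_4))%type.
Definition E' := (E * 'I_7)%type.

Definition gg (p : E') : V' * V' :=
  let e := p.1 in
  match nat_of_ord p.2 with
  | 0 => (inl (g e).1, inr (e, a4))
  | 1 => (inr (e, a4), inr (e, b4))
  | 2 => (inr (e, a4), inr (e, c4))
  | 3 => (inr (e, b4), inr (e, c4))
  | 4 => (inr (e, b4), inr (e, d4))
  | 5 => (inr (e, c4), inr (e, d4))
  | _ => (inr (e, d4), inl (g e).2)
  end.

Lemma inr_eq (x y : E * 'I_4) : (inr x == inr y :> V') = (x == y).
Proof. by apply/eqP/eqP => [[]|->]. Qed.
Lemma inl_eq (x y : V) : (inl x == inl y :> V') = (x == y).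
Proof. by apply/eqP/eqP => [[]|->]. Qed.

Lemma gg_loopless : loopless gg.
Proof.
case=> e [[|[|[|[|[|[|[|k]]]]]]] hk] //=; rewrite ?inr_eq ?xpair_eqE ?eqxx //.
Qed.

Ltac gsimp := rewrite /= ?inr_eq ?inl_eq ?xpair_eqE /= ?eqxx ?andbT ?andbF ?orbF ?orbT ?andTb ?andFb ?orFb ?orTb //=.

Lemma incA e : inc gg (inr (e, a4)) = [set (e, i0); (e, i1); (e, i2)].
Proof.
apply/setP => -[f [[|[|[|[|[|[|[|k]]]]]]] hk]]; rewrite !inE; gsimp.
Qed.
Lemma incB e : inc gg (inr (e, b4)) = [set (e, i1); (e, i3); (e, i4)].
Proof.
apply/setP => -[f [[|[|[|[|[|[|[|k]]]]]]] hk]]; rewrite !inE; gsimp.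
Qed.
Lemma incC e : inc gg (inr (e, c4)) = [set (e, i2); (e, i3); (e, i5)].
Proof.
apply/setP => -[f [[|[|[|[|[|[|[|k]]]]]]] hk]]; rewrite !inE; gsimp.
Qed.
Lemma incD e : inc gg (inr (e, d4)) = [set (e, i4); (e, i5); (e, i6)].
Proof.
apply/setP => -[f [[|[|[|[|[|[|[|k]]]]]]] hk]]; rewrite !inE; gsimp.
Qed.
Definition hu u e : E' := if (g e).1 == u then (e, i0) else (e, i6).

Lemma hu_inj u : injective (hu u).
Proof. by move=> x y; rewrite /hu; do 2!case: ifP => _; case. Qed.

Lemma incl u (M : {set E'}) : (forall e, ((e, i0) \in M) = ((e, i6) \in M)) ->
  inc gg (inl u) :&: M = [set hu u e | e in inc g u :&: [set e | (e, i0) \in M]].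
Proof.
move=> hM; apply/setP => p; apply/idP/imsetP.
- case: p => f [[|[|[|[|[|[|[|k]]]]]]] hk]; rewrite in_setI inE; gsimp.
  + rewrite (_ : Ordinal hk = i0); last exact: val_inj.
    case/andP => /eqP hf fM; exists f; last by rewrite /hu hf eqxx.
    by rewrite !inE hf eqxx fM.
  + rewrite (_ : Ordinal hk = i6); last exact: val_inj.
    case/andP => /eqP hf fM; exists f.
      by rewrite !inE hf eqxx orbT hM fM.
    rewrite /hu; case: eqP => // h1; have := proj1 cg f; by rewrite h1 hf eqxx.
- case=> f; rewrite !inE => /andP [fu fM] ->; rewrite /hu.
  case: ifP => h1; gsimp; rewrite -?hM fM ?h1 //.
  by move: fu; rewrite h1 /= andbT.
Qed.

Lemma card3_set (T : finType) (x y z : T) : x != y -> x != z -> y != z ->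
  #|[set x; y; z]| = 3.
Proof.
move=> d1 d2 d3; rewrite -(setIT [set x; y; z]) card_IM big3 //.
by rewrite !in_setT.
Qed.

Lemma gg_cubic : cubic gg.
Proof.
split; first exact: gg_loopless.
case=> [u | [e [m hk]]]; last case: m hk => [|[|[|[|k]]]] hk.
- rewrite -(setIT (inc gg (inl u))) incl; last by move=> e; rewrite !in_setT.
  have := card_imset (inc g u :&: [set e | (e, i0) \in [set: E']]) (@hu_inj u).
  move=> ->.
  have -> : inc g u :&: [set e | (e, i0) \in [set: E']] = inc g u.
    by apply/setP => e; rewrite !inE andbT.
  by case: cg => _ ->.
- have -> : Ordinal hk = a4 by apply: val_inj.
  by rewrite incA card3_set //; gsimp.
- have -> : Ordinal hk = b4 by apply: val_inj.
  by rewrite incB card3_set //; gsimp.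
- have -> : Ordinal hk = c4 by apply: val_inj.
  by rewrite incC card3_set //; gsimp.
- have -> : Ordinal hk = d4 by apply: val_inj.
  by rewrite incD card3_set //; gsimp.
- by [].
Qed.
Lemma connect_map (T T' : finType) (r : rel T) (r' : rel T') (f : T -> T') :
  (forall x y, r x y -> connect r' (f x) (f y)) ->
  forall x y, connect r x y -> connect r' (f x) (f y).
Proof.
move=> H x y /connectP [p]; elim: p x => [|z p IH] x /=.
  by move=> _ ->; exact: connect0.
by case/andP => rxz pz ly; apply: connect_trans (H _ _ rxz) (IH _ pz ly).
Qed.

Lemma gstep (F : {set E'}) p : p \in F -> connect (adjF gg F) (gg p).1 (gg p).2.
Proof.
move=> pF; apply: connect1; apply/existsP; exists p.
by rewrite pF /joins -surjective_pairing eqxx.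
Qed.

Lemma adj_sym (T U : finType) (h : U -> T * T) F : connect_sym (adjF h F).
Proof.
apply: sym_connect_sym => x y; apply/existsP/existsP => -[f /andP [fF j]];
by exists f; rewrite fF /joins orbC.
Qed.

Lemma gstep' (F : {set E'}) p : p \in F -> connect (adjF gg F) (gg p).2 (gg p).1.
Proof. by move=> pF; rewrite adj_sym; exact: gstep. Qed.

Lemma glift e0 (F : {set E'}) x y : (forall f j, f != e0 -> (f, j) \in F) ->
  connect (adjF g (~: [set e0])) x y -> connect (adjF gg F) (inl x) (inl y).
Proof.
move=> hF; apply: connect_map => {x y} x y /existsP [f /andP [fe j]].
have ne : f != e0 by move: fe; rewrite !inE.
have P : connect (adjF gg F) (inl (g f).1) (inl (g f).2).
  apply: (connect_trans (gstep (p := (f, i0)) (hF _ _ ne))).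
  apply: (connect_trans (gstep (p := (f, i1)) (hF _ _ ne))).
  apply: (connect_trans (gstep (p := (f, i4)) (hF _ _ ne))).
  exact: (gstep (p := (f, i6)) (hF _ _ ne)).
by move: P; case/orP: j => /eqP -> //=; rewrite adj_sym.
Qed.

Hypothesis bg : bridgeless g.

Lemma gg_bridgeless : bridgeless gg.
Proof.
move=> [e [m hk]]; apply/negP; rewrite negbK.
have hb : connect (adjF g (~: [set e])) (g e).1 (g e).2.
  have nb : ~ bridge g e by apply: bg.
  by move: nb; rewrite /bridge => /negP; rewrite negbK.
have hF (j : 'I_7) f (k : 'I_7) : f != e -> (f, k) \in ~: [set (e, j)].
  by move=> ne; rewrite !inE xpair_eqE (negbTE ne).
case: m hk => [|[|[|[|[|[|[|k]]]]]]] hk //.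
- rewrite (_ : Ordinal hk = i0) /=; last exact: val_inj.
  have L := glift (hF i0) hb.
  apply: (connect_trans L).
  apply: (connect_trans (gstep' (p := (e, i6)) _)); first by rewrite !inE xpair_eqE eqxx.
  apply: (connect_trans (gstep' (p := (e, i4)) _)); first by rewrite !inE xpair_eqE eqxx.
  by apply: (gstep' (p := (e, i1)) _); rewrite !inE xpair_eqE eqxx.
- rewrite (_ : Ordinal hk = i1) /=; last exact: val_inj.
  apply: (connect_trans (gstep (p := (e, i2)) _)); first by rewrite !inE xpair_eqE eqxx.
  by apply: (gstep' (p := (e, i3)) _); rewrite !inE xpair_eqE eqxx.
- rewrite (_ : Ordinal hk = i2) /=; last exact: val_inj.
  apply: (connect_trans (gstep (p := (e, i1)) _)); first by rewrite !inE xpair_eqE eqxx.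
  by apply: (gstep (p := (e, i3)) _); rewrite !inE xpair_eqE eqxx.
- rewrite (_ : Ordinal hk = i3) /=; last exact: val_inj.
  apply: (connect_trans (gstep' (p := (e, i1)) _)); first by rewrite !inE xpair_eqE eqxx.
  by apply: (gstep (p := (e, i2)) _); rewrite !inE xpair_eqE eqxx.
- rewrite (_ : Ordinal hk = i4) /=; last exact: val_inj.
  apply: (connect_trans (gstep (p := (e, i3)) _)); first by rewrite !inE xpair_eqE eqxx.
  by apply: (gstep (p := (e, i5)) _); rewrite !inE xpair_eqE eqxx.
- rewrite (_ : Ordinal hk = i5) /=; last exact: val_inj.
  apply: (connect_trans (gstep' (p := (e, i3)) _)); first by rewrite !inE xpair_eqE eqxx.
  by apply: (gstep (p := (e, i4)) _); rewrite !inE xpair_eqE eqxx.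
- rewrite (_ : Ordinal hk = i6) /=; last exact: val_inj.
  apply: (connect_trans (gstep' (p := (e, i4)) _)); first by rewrite !inE xpair_eqE eqxx.
  apply: (connect_trans (gstep' (p := (e, i1)) _)); first by rewrite !inE xpair_eqE eqxx.
  apply: (connect_trans (gstep' (p := (e, i0)) _)); first by rewrite !inE xpair_eqE eqxx.
  exact: (glift (hF i6) hb).
Qed.

Section Extract.
Variable M : {set E'}.
Hypothesis hM : one_factor gg M.

Lemma gcnt e :
  [/\ ((e, i0) \in M) + ((e, i1) \in M) + ((e, i2) \in M) = 1,
      ((e, i1) \in M) + ((e, i3) \in M) + ((e, i4) \in M) = 1,
      ((e, i2) \in M) + ((e, i3) \in M) + ((e, i5) \in M) = 1 &
      ((e, i4) \in M) + ((e, i5) \in M) + ((e, i6) \in M) = 1].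
Proof.
split.
- by apply: (of_cnt hM (v := inr (e, a4))); rewrite ?incA // xpair_eqE eqxx.
- by apply: (of_cnt hM (v := inr (e, b4))); rewrite ?incB // xpair_eqE eqxx.
- by apply: (of_cnt hM (v := inr (e, c4))); rewrite ?incC // xpair_eqE eqxx.
- by apply: (of_cnt hM (v := inr (e, d4))); rewrite ?incD // xpair_eqE eqxx.
Qed.

Lemma gad06 e : ((e, i0) \in M) = ((e, i6) \in M).
Proof.
have [] := gcnt e.
by case: ((e, i0) \in M); case: ((e, i1) \in M); case: ((e, i2) \in M);
  case: ((e, i3) \in M); case: ((e, i4) \in M); case: ((e, i5) \in M);
  case: ((e, i6) \in M).
Qed.

Lemma gad0 e : (e, i0) \in M -> [/\ (e, i3) \in M, (e, i1) \notin M,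
  (e, i2) \notin M, (e, i4) \notin M & (e, i5) \notin M].
Proof.
have [] := gcnt e.
by case: ((e, i0) \in M); case: ((e, i1) \in M); case: ((e, i2) \in M);
  case: ((e, i3) \in M); case: ((e, i4) \in M); case: ((e, i5) \in M);
  case: ((e, i6) \in M).
Qed.

Definition pr := [set e | (e, i0) \in M].

Lemma pr_of : one_factor g pr.
Proof.
move=> u; have := hM (inl u); rewrite incl; last exact: gad06.
by rewrite (card_imset _ (@hu_inj u)).
Qed.
End Extract.

Lemma gadget_fr M1 M2 M3 : one_factor gg M1 -> one_factor gg M2 -> one_factor gg M3 ->
  triangle_free gg (core M1 M2 M3) \/ acyclic gg (E0 M1 M2 M3) ->
  pr M1 :&: pr M2 :&: pr M3 = set0.
Proof.
move=> h1 h2 h3 H; apply/setP => e; rewrite !inE; apply/negP => /andP [/andP [m1 m2] m3].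
have [a1 b1 c1 d1 f1] := gad0 h1 m1.
have [a2 b2 c2 d2 f2] := gad0 h2 m2.
have [a3 b3 c3 d3 f3] := gad0 h3 m3.
case: H => H.
- apply: (H [:: inr (e, a4); inr (e, b4); inr (e, c4)] [:: (e, i1); (e, i3); (e, i2)] erefl).
  split; split => //; rewrite /=.
  all: try by rewrite !inE; gsimp.
  all: try by rewrite /joins /= !eqxx ?orbT.
  by rewrite !inE /mult3 (negbTE b1) (negbTE b2) (negbTE b3) a1 a2 a3
      (negbTE c1) (negbTE c2) (negbTE c3).
- apply: (H [:: inr (e, a4); inr (e, b4); inr (e, d4); inr (e, c4)]
            [:: (e, i1); (e, i4); (e, i5); (e, i2)]).
  split; split => //; rewrite /=.
  all: try by rewrite !inE; gsimp.
  all: try by rewrite /joins /= !eqxx ?orbT.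
  by rewrite !inE /mult3 (negbTE b1) (negbTE b2) (negbTE b3)
      (negbTE c1) (negbTE c2) (negbTE c3) (negbTE d1) (negbTE d2) (negbTE d3)
      (negbTE f1) (negbTE f2) (negbTE f3).
Qed.
End Gadget.


Local Open Scope ring_scope.
Definition B3 := (bool * bool * bool)%type.
Definition j0 : 'I_3 := @Ordinal 3 0 isT.
Definition j1 : 'I_3 := @Ordinal 3 1 isT.
Definition j2 : 'I_3 := @Ordinal 3 2 isT.
Definition mk (t : B3) : Z23 := \row_(i < 3) ((nth false [:: t.1.1; t.1.2; t.2] i : nat)%:R)%R.
Definition cd (x : Z23) : B3 := (x 0 j0 != 0%R, x 0 j1 != 0%R, x 0 j2 != 0%R).
Definition bx (a b : B3) : B3 := (a.1.1 (+) b.1.1, a.1.2 (+) b.1.2, a.2 (+) b.2).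
Definition z3 : B3 := (false, false, false).

Lemma f2b (a : 'F_2) : (((a != 0%R) : nat)%:R)%R = a.
Proof. by case: a => [[|[|]]] // ?; apply: val_inj. Qed.

Lemma b2f (b : bool) : ((b : nat)%:R != 0 :> 'F_2)%R = b.
Proof. by case: b; rewrite ?oner_neq0 ?eqxx. Qed.

Lemma mkK : cancel cd mk.
Proof.
move=> x; apply/rowP => j; rewrite mxE.
rewrite /cd; case: j => [[|[|[|]]] hj] //=.
- by rewrite (_ : Ordinal hj = j0) ?f2b //; apply: val_inj.
- by rewrite (_ : Ordinal hj = j1) ?f2b //; apply: val_inj.
- by rewrite (_ : Ordinal hj = j2) ?f2b //; apply: val_inj.
Qed.

Lemma cdK : cancel mk cd.
Proof. by case=> [[a b] c]; rewrite /cd !mxE /= !b2f. Qed.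

Lemma mk_inj : injective mk.
Proof. exact: can_inj cdK. Qed.

Lemma mk0 : mk z3 = 0%R.
Proof. by apply/rowP => j; rewrite !mxE; case: j => [[|[|[|]]] hj]. Qed.

Lemma F2eq (a b c : bool) :
  (((a : nat)%:R + ((b : nat)%:R + (c : nat)%:R) == 0 :> 'F_2)%R) = (c == a (+) b).
Proof. by case: a; case: b; case: c; vm_compute. Qed.

Lemma mk_sum (t1 t2 t3 : B3) :
  (mk t1 + (mk t2 + mk t3) == 0)%R = (t3 == bx t1 t2).
Proof.
case: t1 t2 t3 => [[a1 b1] c1] [[a2 b2] c2] [[a3 b3] c3].
apply/eqP/eqP.
- move/rowP => h.
  have e0 := h j0; have e1 := h j1; have e2 := h j2.
  rewrite !mxE /= in e0 e1 e2.
  move/eqP: e0; move/eqP: e1; move/eqP: e2; rewrite !F2eq => /eqP -> /eqP -> /eqP ->.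
  by [].
- case=> -> -> ->; apply/rowP => j; rewrite !mxE.
  by case: j => [[|[|[|]]] hj] //=; apply/eqP; rewrite F2eq.
Qed.

Definition all8 : seq B3 := [:: (false,false,false); (false,false,true); (false,true,false); (false,true,true); (true,false,false); (true,false,true); (true,true,false); (true,true,true)].

Lemma all8P x : x \in all8.
Proof. by case: x => [[[] []] []]. Qed.

Definition LL : seq (seq B3) :=
  [:: [:: (false,true,true); (true,false,true); (true,true,false)];
      [:: (true,true,true); (false,true,true); (true,false,false)];
      [:: (true,true,true); (true,false,true); (false,true,false)];
      [:: (true,true,true); (true,true,false); (false,false,true)]].

Definition tb (x y z : bool) : B3 := (~~ x, ~~ y, ~~ z).

Lemma bool21 : forall x11 x12 x13 x21 x22 x23 x31 x32 x33 : bool,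
  [&& (x11 + x21 + x31 == 1)%N, (x12 + x22 + x32 == 1)%N, (x13 + x23 + x33 == 1)%N,
      ~~ [&& x11, x12 & x13], ~~ [&& x21, x22 & x23] & ~~ [&& x31, x32 & x33]] ==>
  [&& tb x11 x12 x13 != tb x21 x22 x23, tb x11 x12 x13 != tb x31 x32 x33,
      tb x21 x22 x23 != tb x31 x32 x33,
      tb x31 x32 x33 == bx (tb x11 x12 x13) (tb x21 x22 x23) &
      has (fun l => all (fun x => (x \in [:: tb x11 x12 x13; tb x21 x22 x23; tb x31 x32 x33]) == (x \in l)) all8) LL].
Proof. by do 9!case; vm_compute. Qed.



Local Open Scope ring_scope.
Section S21.
Variables (V E : finType) (g : E -> V * V).
Hypothesis cg : cubic g.
Variables (M1 M2 M3 : {set E}).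
Hypotheses (h1 : one_factor g M1) (h2 : one_factor g M2) (h3 : one_factor g M3).
Hypothesis h0 : M1 :&: M2 :&: M3 = set0.

Definition tt3 e := tb (e \in M1) (e \in M2) (e \in M3).
Definition phi21 e := mk (tt3 e).

Lemma notall e : ~~ [&& e \in M1, e \in M2 & e \in M3].
Proof.
apply/negP => /and3P [a b c].
have : e \in M1 :&: M2 :&: M3 by rewrite !in_setI a b c.
by rewrite h0 in_set0.
Qed.

Lemma v21 v : exists e1 e2 e3, [/\ e1 != e2, e1 != e3, e2 != e3, inc g v = [set e1; e2; e3] &
  [&& tt3 e1 != tt3 e2, tt3 e1 != tt3 e3, tt3 e2 != tt3 e3,
      tt3 e3 == bx (tt3 e1) (tt3 e2) &
      has (fun l => all (fun x => (x \in [:: tt3 e1; tt3 e2; tt3 e3]) == (x \in l)) all8) LL]].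
Proof.
have [e1 [e2 [e3 [d12 d13 d23 hv]]]] := vtx3 cg v.
exists e1, e2, e3; split => //.
have c1 := of_cnt h1 d12 d13 d23 hv.
have c2 := of_cnt h2 d12 d13 d23 hv.
have c3 := of_cnt h3 d12 d13 d23 hv.
have := bool21 (e1 \in M1) (e1 \in M2) (e1 \in M3) (e2 \in M1) (e2 \in M2) (e2 \in M3)
  (e3 \in M1) (e3 \in M2) (e3 \in M3).
by rewrite c1 c2 c3 !eqxx !notall.
Qed.

Lemma ff21 : fano_flow g phi21.
Proof.
split.
  move=> e; rewrite -mk0; apply/negP => /eqP /mk_inj.
  rewrite /tt3 /tb /z3 => -[/negbFE a /negbFE b /negbFE c].
  by have := notall e; rewrite a b c.
move=> v; have [e1 [e2 [e3 [d12 d13 d23 hv /and5P [t12 t13 t23 t3 _]]]]] := v21 v.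
split; last first.
  by rewrite hv big3 //=; apply/eqP; rewrite /phi21 mk_sum.
move=> e f; rewrite hv => /in3 he /in3 hf ef; apply/negP => /eqP /mk_inj /eqP.
case: he hf => -> [] -> in ef *.
all: first [by move: ef; rewrite eqxx | by rewrite (negbTE t12) | by rewrite (negbTE t13)
  | by rewrite (negbTE t23) | by rewrite eq_sym (negbTE t12) | by rewrite eq_sym (negbTE t13)
  | by rewrite eq_sym (negbTE t23)].
Qed.

Definition SL : seq {set B3} := [seq [set x in l] | l <- LL].

Lemma T_in v : [set tt3 e | e in inc g v] \in SL.
Proof.
have [e1 [e2 [e3 [d12 d13 d23 hv /and5P [_ _ _ _ /hasP [l lL /allP hl]]]]]] := v21 v.
have -> : [set tt3 e | e in inc g v] = [set x in l].
  apply/setP => x; rewrite inE -(eqP (hl x (all8P x))) hv !inE.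
  apply/imsetP/idP => [[e /in3 [] -> ->]|]; rewrite ?eqxx ?orbT //.
  by case/or3P => /eqP ->; [exists e1|exists e2|exists e3]; rewrite // !inE eqxx ?orbT.
by apply: map_f.
Qed.

Lemma kl21 : k_line_fano_flow g 4 phi21.
Proof.
split; first exact: ff21.
have -> : [set line_at g phi21 v | v in V] =
  [set (fun S : {set B3} => [set mk x | x in S]) S | S in [set [set tt3 e | e in inc g v] | v in V]].
  rewrite -imset_comp; apply: eq_imset => v /=.
  by rewrite /line_at -imset_comp.
apply: (leq_trans (leq_imset_card _ _)).
apply: (@leq_trans #|[set S in SL]|).
  apply: subset_leq_card; apply/subsetP => S /imsetP [v _ ->]; by rewrite inE T_in.
by rewrite cardsE (leq_trans (card_size _)).
Qed.
End S21.

Section Fin.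
Definition lines7 : seq (seq B3) := [:: [:: (false,false,true); (false,true,false); (false,true,true)];
  [:: (false,false,true); (true,false,false); (true,false,true)];
  [:: (false,false,true); (true,true,false); (true,true,true)];
  [:: (false,true,false); (true,false,false); (true,true,false)];
  [:: (false,true,false); (true,false,true); (true,true,true)];
  [:: (false,true,true); (true,false,false); (true,true,true)];
  [:: (false,true,true); (true,false,true); (true,true,false)]].
Definition cands : seq (seq B3 * seq B3 * seq B3) := [:: ([:: (false,false,true); (false,true,false); (false,true,true)], [:: (false,true,false); (true,false,false); (true,true,false)], [:: (false,false,true); (true,false,false); (true,false,true)]);
  ([:: (false,true,true); (true,false,true); (true,true,false)], [:: (false,true,false); (true,false,true); (true,true,true)], [:: (false,false,true); (true,true,false); (true,true,true)]);
  ([:: (false,true,false); (true,false,false); (true,true,false)], [:: (false,true,false); (true,false,true); (true,true,true)], [:: (false,true,true); (true,false,false); (true,true,true)]);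
  ([:: (false,false,true); (false,true,false)], [:: (true,false,true); (true,true,false)], [:: (true,false,false); (true,true,true)]);
  ([:: (false,false,true); (true,true,false); (true,true,true)], [:: (false,true,true); (true,false,false); (true,true,true)], [:: (false,false,true); (true,false,false); (true,false,true)]);
  ([:: (false,true,true); (true,false,true)], [:: (false,true,false); (true,false,false)], [:: (false,false,true); (true,true,true)]);
  ([:: (false,false,true); (true,false,false)], [:: (false,true,false); (true,true,true)], [:: (false,true,true); (true,true,false)]);
  ([:: (false,false,true); (false,true,false); (false,true,true)], [:: (false,false,true); (true,true,false); (true,true,true)], [:: (false,true,false); (true,false,true); (true,true,true)]);
  ([:: (false,false,true); (false,true,false); (false,true,true)], [:: (false,true,true); (true,false,true); (true,true,false)], [:: (false,true,false); (true,false,true); (true,true,true)]);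
  ([:: (false,true,false); (true,false,false); (true,true,false)], [:: (false,false,true); (true,false,false); (true,false,true)], [:: (false,false,true); (true,true,false); (true,true,true)]);
  ([:: (false,false,true); (true,false,false); (true,false,true)], [:: (false,true,false); (true,false,false); (true,true,false)], [:: (false,true,true); (true,false,true); (true,true,false)]);
  ([:: (false,false,true); (false,true,false); (false,true,true)], [:: (false,true,true); (true,false,false); (true,true,true)], [:: (false,true,false); (true,false,false); (true,true,false)]);
  ([:: (false,true,true); (true,false,false); (true,true,true)], [:: (false,false,true); (true,false,false); (true,false,true)], [:: (false,false,true); (false,true,false); (false,true,true)]);
  ([:: (false,false,true); (true,true,false); (true,true,true)], [:: (false,false,true); (true,false,false); (true,false,true)], [:: (false,true,true); (true,false,true); (true,true,false)]);
  ([:: (false,false,true); (true,false,false); (true,false,true)], [:: (false,true,false); (true,false,true); (true,true,true)], [:: (false,true,false); (true,false,false); (true,true,false)]);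
  ([:: (false,false,true); (true,false,false); (true,false,true)], [:: (false,true,false); (true,false,true); (true,true,true)], [:: (false,false,true); (true,true,false); (true,true,true)]);
  ([:: (false,true,true); (true,false,true); (true,true,false)], [:: (false,true,false); (true,false,false); (true,true,false)], [:: (false,true,false); (true,false,true); (true,true,true)]);
  ([:: (false,true,false); (true,false,true); (true,true,true)], [:: (false,false,true); (false,true,false); (false,true,true)], [:: (false,true,true); (true,false,false); (true,true,true)]);
  ([:: (false,true,false); (true,false,true)], [:: (false,false,true); (true,true,false)], [:: (false,true,true); (true,false,false)]);
  ([:: (false,true,true); (true,false,false); (true,true,true)], [:: (false,true,true); (true,false,true); (true,true,false)], [:: (false,false,true); (true,true,false); (true,true,true)]);
  ([:: (false,false,true); (false,true,false); (false,true,true)], [:: (false,true,true); (true,false,false); (true,true,true)], [:: (false,false,true); (true,true,false); (true,true,true)]);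
  ([:: (true,false,true); (true,true,true)], [:: (true,false,false); (true,true,false)], [:: (false,false,true); (false,true,true)]);
  ([:: (false,false,true); (true,false,true)], [:: (false,true,true); (true,true,true)], [:: (false,true,false); (true,true,false)]);
  ([:: (false,false,true); (true,true,false); (true,true,true)], [:: (false,true,false); (true,false,false); (true,true,false)], [:: (false,false,true); (false,true,false); (false,true,true)]);
  ([:: (false,true,false); (true,false,false); (true,true,false)], [:: (false,false,true); (true,true,false); (true,true,true)], [:: (false,true,false); (true,false,true); (true,true,true)]);
  ([:: (false,true,false); (true,false,false); (true,true,false)], [:: (false,true,true); (true,false,false); (true,true,true)], [:: (false,false,true); (true,true,false); (true,true,true)]);
  ([:: (true,false,false); (true,false,true)], [:: (true,true,false); (true,true,true)], [:: (false,true,false); (false,true,true)]);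
  ([:: (false,false,true); (true,false,false); (true,false,true)], [:: (false,false,true); (false,true,false); (false,true,true)], [:: (false,true,true); (true,false,true); (true,true,false)]);
  ([:: (false,false,true); (false,true,false); (false,true,true)], [:: (false,false,true); (true,false,false); (true,false,true)], [:: (false,true,false); (true,false,true); (true,true,true)]);
  ([:: (false,true,true); (true,false,true); (true,true,false)], [:: (false,true,true); (true,false,false); (true,true,true)], [:: (false,false,true); (true,false,false); (true,false,true)]);
  ([:: (false,true,false); (true,false,false); (true,true,false)], [:: (false,true,true); (true,false,true); (true,true,false)], [:: (false,false,true); (false,true,false); (false,true,true)]);
  ([:: (false,true,true); (true,false,false); (true,true,true)], [:: (false,true,false); (true,false,false); (true,true,false)], [:: (false,true,true); (true,false,true); (true,true,false)]);
  ([:: (false,true,false); (true,false,true); (true,true,true)], [:: (false,false,true); (true,false,false); (true,false,true)], [:: (false,true,true); (true,false,false); (true,true,true)]);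
  ([:: (false,true,false); (true,false,true); (true,true,true)], [:: (false,true,true); (true,false,false); (true,true,true)], [:: (false,true,true); (true,false,true); (true,true,false)]);
  ([:: (false,true,true); (true,false,true); (true,true,false)], [:: (false,false,true); (true,true,false); (true,true,true)], [:: (false,false,true); (false,true,false); (false,true,true)])].

Definition eqb3 (x y : B3) : bool :=
  match x, y with (a,b,c), (a',b',c') => (eqb a a') && (eqb b b') && (eqb c c') end.
Definition inb (x : B3) (l : seq B3) := has (eqb3 x) l.
Definition ok1 (P l : seq B3) := (count (fun x => inb x P) l == 1)%N.
Definition good (c : seq B3 * seq B3 * seq B3) (ls : seq (seq B3)) :=
  all (fun l => [&& ok1 c.1.1 l, ok1 c.1.2 l & ok1 c.2 l]) ls &&
  all (fun x => ~~ [&& inb x c.1.1, inb x c.1.2 & inb x c.2]) all8.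

Lemma fin4 : all (fun l1 => all (fun l2 => all (fun l3 => all (fun l4 =>
  has (fun c => good c [:: l1; l2; l3; l4]) cands) lines7) lines7) lines7) lines7.
Proof. vm_compute. reflexivity. Qed.

Lemma finA : all (fun a => all (fun b => (a != b) ==> (a != z3) ==> (b != z3) ==>
  has (fun l => all (fun x => inb x l == [|| x == a, x == b | x == bx a b]) all8) lines7)
  all8) all8.
Proof. vm_compute. reflexivity. Qed.

Lemma lines_uniq : all uniq lines7.
Proof. vm_compute. reflexivity. Qed.

Lemma eqb3E x y : eqb3 x y = (x == y).
Proof. by case: x y => [[a b] c] [[a' b'] c']; case: a; case: b; case: c; case: a'; case: b'; case: c'. Qed.

Lemma inbE x l : inb x l = (x \in l).
Proof. by rewrite /inb (eq_has (a2 := pred1 x)) ?has_pred1 // => y; rewrite eqb3E. Qed.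

Lemma good_sub c ls ls' : {subset ls' <= ls} -> good c ls -> good c ls'.
Proof.
move=> sub; rewrite /good => /andP [/allP h ->]; rewrite andbT.
by apply/allP => l /sub /h.
Qed.

Lemma fin_any W : (size W <= 4)%N -> all (fun l => l \in lines7) W ->
  exists2 c, c \in cands & good c W.
Proof.
move=> sz hW.
have G : forall l1 l2 l3 l4, l1 \in lines7 -> l2 \in lines7 -> l3 \in lines7 -> l4 \in lines7 ->
  {subset W <= [:: l1; l2; l3; l4]} -> exists2 c, c \in cands & good c W.
  move=> l1 l2 l3 l4 m1 m2 m3 m4 sub.
  move/allP: fin4 => /(_ _ m1) /allP /(_ _ m2) /allP /(_ _ m3) /allP /(_ _ m4) /hasP [c cc gc].
  by exists c => //; apply: good_sub gc.
have d : nth [::] lines7 0 \in lines7 by [].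
case: W sz hW G => [|a [|b [|c [|e [|? ?]]]]] //= _.
- by move=> _ G; apply: (G _ _ _ _ d d d d).
- by rewrite andbT => ha G; apply: (G _ _ _ _ ha ha ha ha) => x; rewrite !inE => ->.
- case/and3P => ha hb _ G; apply: (G _ _ _ _ ha hb hb hb) => x; rewrite !inE.
  by case/orP => ->; rewrite ?orbT.
- case/and4P => ha hb hc _ G; apply: (G _ _ _ _ ha hb hc hc) => x; rewrite !inE.
  by case/or3P => ->; rewrite ?orbT.
- case/and5P => ha hb hc he _ G; apply: (G _ _ _ _ ha hb hc he) => x; rewrite !inE.
  by case/or4P => ->; rewrite ?orbT.
Qed.
End Fin.


Local Open Scope ring_scope.

Section S12.
Variables (V E : finType) (g : E -> V * V).
Hypothesis cg : cubic g.
Variable phi : E -> Z23.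
Hypothesis hk : k_line_fano_flow g 4 phi.

Definition s12 e := cd (phi e).
Definition L12 v := [set s12 e | e in inc g v].

Lemma phi_s e : phi e = mk (s12 e).
Proof. by rewrite /s12 mkK. Qed.

Lemma loc12 v : exists e1 e2 e3, [/\ e1 != e2, e1 != e3, e2 != e3, inc g v = [set e1; e2; e3] &
  [/\ s12 e1 != s12 e2, s12 e1 != z3, s12 e2 != z3 & s12 e3 = bx (s12 e1) (s12 e2)]].
Proof.
have [[nz hv] _] := hk.
have [e1 [e2 [e3 [d12 d13 d23 hi]]]] := vtx3 cg v.
exists e1, e2, e3; split => //.
have [hd hs] := hv v.
have nz' e : s12 e != z3.
  by apply: contra (nz e) => /eqP h; rewrite phi_s h mk0.
split; rewrite ?nz' //.
  have m1 : e1 \in inc g v by rewrite hi !inE eqxx.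
  have m2 : e2 \in inc g v by rewrite hi !inE eqxx orbT.
  by apply: contra (hd e1 e2 m1 m2 d12) => /eqP h; rewrite !phi_s h.
apply/eqP; rewrite -mk_sum -!phi_s.
by move: hs; rewrite hi big3 // => ->.
Qed.

Lemma uniq3 a b : a != z3 -> b != z3 -> a != b -> uniq [:: a; b; bx a b].
Proof.
by case: a => [[[] []] []]; case: b => [[[] []] []].
Qed.

Lemma Lmem v e1 e2 e3 : inc g v = [set e1; e2; e3] -> forall x,
  (x \in L12 v) = (x \in [:: s12 e1; s12 e2; s12 e3]).
Proof.
move=> hi x; rewrite /L12 hi !inE.
apply/imsetP/idP => [[e /in3 [] -> ->]|]; rewrite ?eqxx ?orbT //.
by case/or3P => /eqP ->; [exists e1|exists e2|exists e3]; rewrite // !inE eqxx ?orbT.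
Qed.

Definition F12 (S : {set B3}) : seq B3 :=
  nth [::] lines7 (find (fun l => all (fun x => inb x l == (x \in S)) all8) lines7).

Lemma F_spec v : F12 (L12 v) \in lines7 /\ (forall x, (x \in F12 (L12 v)) = (x \in L12 v)).
Proof.
have [e1 [e2 [e3 [d12 d13 d23 hi [s1 n1 n2 s3]]]]] := loc12 v.
move/allP: finA => /(_ (s12 e1) (all8P _)) /allP /(_ (s12 e2) (all8P _)).
rewrite s1 n1 n2 !implyTb => hh.
have hh' : has (fun l => all (fun x => inb x l == (x \in L12 v)) all8) lines7.
  case/hasP: hh => l ll al; apply/hasP; exists l => //; apply/allP => x hx.
  by rewrite (Lmem hi) s3 !inE; exact: (allP al x hx).
split; first by rewrite /F12 mem_nth // -has_find.
move=> x; have := allP (nth_find [::] hh') x (all8P x).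
by rewrite inbE => /eqP.
Qed.

Lemma of12 (P : seq B3) : (forall v, ok1 P (F12 (L12 v))) ->
  one_factor g [set e | s12 e \in P].
Proof.
move=> hP v; have [e1 [e2 [e3 [d12 d13 d23 hi [s1 n1 n2 s3]]]]] := loc12 v.
rewrite card_IM hi big3 // !inE.
have [fl fm] := F_spec v.
have pe : perm_eq (F12 (L12 v)) [:: s12 e1; s12 e2; s12 e3].
  apply: uniq_perm.
  - by move/allP: lines_uniq => /(_ _ fl).
  - by rewrite s3 uniq3.
  - by move=> x; rewrite fm (Lmem hi).
have := hP v; rewrite /ok1 (eq_count (a2 := mem P)); last by move=> x; rewrite /= inbE.
by rewrite (permP pe) /= addn0 addnA => /eqP.
Qed.

Lemma fr12 : exists M1 M2 M3 : {set E},
  [/\ one_factor g M1, one_factor g M2, one_factor g M3 & M1 :&: M2 :&: M3 = set0].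
Proof.
set W := [seq F12 Y | Y <- enum [set L12 v | v in V]].
have szW : (size W <= 4)%N.
  rewrite size_map -cardE; case: hk => _ h4; apply: leq_trans h4.
  have -> : [set L12 v | v in V] =
    [set (fun S : {set Z23} => [set cd x | x in S]) S | S in [set line_at g phi v | v in V]].
    rewrite -imset_comp; apply: eq_imset => v /=.
    by rewrite /line_at /L12 -imset_comp.
  exact: leq_imset_card.
have allW : all (fun l => l \in lines7) W.
  by apply/allP => l /mapP [X]; rewrite mem_enum => /imsetP [v _ ->] ->; case: (F_spec v).
have [c cc gc] := fin_any szW allW.
have memW v : F12 (L12 v) \in W.
  by apply: map_f; rewrite mem_enum; apply: imset_f.
move: gc; rewrite /good => /andP [/allP gl /allP gd].
exists [set e | s12 e \in c.1.1], [set e | s12 e \in c.1.2], [set e | s12 e \in c.2].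
split.
- by apply: of12 => v; case/and3P: (gl _ (memW v)).
- by apply: of12 => v; case/and3P: (gl _ (memW v)).
- by apply: of12 => v; case/and3P: (gl _ (memW v)).
apply/setP => e; rewrite !inE; apply/negP => /andP [/andP [a b] d].
by have := gd (s12 e) (all8P _); rewrite !inbE a b d.
Qed.
End S12.

Close Scope ring_scope.

Theorem theorem3p2 : [<-> stmt1; stmt2; stmt3; stmt4; stmt5].
Proof.
tfae.
- move=> H V E g cg bg; have [phi hphi] := H V E g cg bg.
  have := fr12 cg hphi. exact (fun x => x).
- move=> H V E g cg bg; have [M1 [M2 [M3 [h1 h2 h3 h0]]]] := H V E g cg bg.
  by exists M1, M2, M3; split => //; apply: s2_3.
- move=> H V E g cg bg; have [M1 [M2 [M3 [h1 h2 h3 hb]]]] := H V E g cg bg.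
  by exists M1, M2, M3; split => //; apply: bip_tf.
- move=> H V E g cg bg.
  have [M1 [M2 [M3 [h1 h2 h3 ht]]]] := H _ _ _ (gg_cubic cg) (gg_bridgeless bg).
  have h0 := gadget_fr h1 h2 h3 (or_introl ht).
  have p1 := pr_of cg h1; have p2 := pr_of cg h2; have p3 := pr_of cg h3.
  exists (pr M1), (pr M2), (pr M3); split => //.
  exact: (s2_5 cg p1 p2 p3 h0).
- move=> H V E g cg bg.
  have [M1 [M2 [M3 [h1 h2 h3 ht]]]] := H _ _ _ (gg_cubic cg) (gg_bridgeless bg).
  have h0 := gadget_fr h1 h2 h3 (or_intror ht).
  have p1 := pr_of cg h1; have p2 := pr_of cg h2; have p3 := pr_of cg h3.
  exists (phi21 (pr M1) (pr M2) (pr M3)).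
  exact: (kl21 cg p1 p2 p3 h0).
Qed.
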